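(* Let $L$ be a frame and $f\in\overline{\mathrm{F}}(L)$. The following are equivalent: (1) for every $g\in\overline{\mathrm{F}}(L)$, $f\vee^{\overline{\mathrm{F}}(L)}g=\boldsymbol{+\infty}$ implies $g=\boldsymbol{+\infty}$; (2) $\big(\bigvee_{s\in\mathbb{Q}}f(\textsf{---},s)\big)^\ast=0$; (3) $\bigwedge_{r\in\mathbb{Q}}f(r,\textsf{---})=0$.
   Context: $\mathbb{Q}$ is the rationals. A sublocale of $L$ is a subset closed under arbitrary meets and such that $x\to s\in S$ for $x\in L$, $s\in S$; $\mathrm{coS}(L)$ is the frame of all sublocales ordered by reverse inclusion (bottom $0=L$, top $1=\{1\}$); all lattice operations and pseudocomplements $^\ast$ here are taken in $\mathrm{coS}(L)$. The frame $\mathfrak{L}(\overline{\mathbb{IR}})$ is presented by generators $(r,\textsf{---})$, $(\textsf{---},s)$ ($r,s\in\mathbb{Q}$) subject to (r1) $(r,\textsf{---})\wedge(\textsf{---},s)=0$ whenever $r\ge s$; (r3) $(r,\textsf{---})=\bigvee_{s>r}(s,\textsf{---})$; (r4) $(\textsf{---},s)=\bigvee_{r<s}(\textsf{---},r)$. $\overline{\mathrm{F}}(L)$ (arbitrary extended real functions on $L$) is the set of frame homomorphisms $f\colon\mathfrak{L}(\overline{\mathbb{IR}})\to\mathrm{coS}(L)$ with $f(r,\textsf{---})^\ast\le f(\textsf{---},s)$ and $f(\textsf{---},s)^\ast\le f(r,\textsf{---})$ for all $r<s$, ordered by $f\le g$ iff $f(r,\textsf{---})\le g(r,\textsf{---})$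 and $g(\textsf{---},s)\le f(\textsf{---},s)$ for all $r,s$; it is a complete lattice. $\boldsymbol{+\infty}$ is its top element, given by $\boldsymbol{+\infty}(r,\textsf{---})=1$ and $\boldsymbol{+\infty}(\textsf{---},s)=0$ for all $r,s$. *)

(* Defs.v *)
From mathcomp Require Import all_boot all_order all_algebra.
Import Order.TTheory GRing.Theory Num.Theory.

Set Implicit Arguments.
Unset Strict Implicit.
Unset Printing Implicit Defensive.

Record frame := Frame {
  fcarrier :> Type;
  fle : fcarrier -> fcarrier -> Prop;
  fle_refl : forall x, fle x x;
  fle_trans : forall x y z, fle x y -> fle y z -> fle x z;
  fle_antisym : forall x y, fle x y -> fle y x -> x = y;
  fsup : (fcarrier -> Prop) -> fcarrier;
  fsup_ub : forall (A : fcarrier -> Prop) x, A x -> fle x (fsup A);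
  fsup_least : forall (A : fcarrier -> Prop) y,
      (forall x, A x -> fle x y) -> fle (fsup A) y;
  fmeet : fcarrier -> fcarrier -> fcarrier;
  fmeet_l : forall x y, fle (fmeet x y) x;
  fmeet_r : forall x y, fle (fmeet x y) y;
  fmeet_glb : forall x y z, fle z x -> fle z y -> fle z (fmeet x y);
  fmeet_distr : forall x (A : fcarrier -> Prop),
      fmeet x (fsup A) = fsup (fun y => exists a, A a /\ y = fmeet x a)
}.

Section FrameOps.
Variable L : frame.

Definition ftop : L := fsup (fun _ => True).
Definition finf (A : L -> Prop) : L :=
  fsup (fun z => forall a, A a -> fle z a).
Definition fimp (x y : L) : L := fsup (fun z => fle (fmeet z x) y).

Definition is_sublocale (S : L -> Prop) : Prop :=
  (forall A : L -> Prop, (forall a, A a -> S a) -> S (finf A)) /\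
  (forall x s, S s -> S (fimp x s)).

(* The frame coS(L) of sublocales, ordered by REVERSE inclusion.       *)
(* Elements are represented by their underlying subsets L -> Prop      *)
(* (sublocale-hood is required where elements are introduced).         *)
Definition cle (S T : L -> Prop) : Prop := forall x, T x -> S x.
Definition ceq (S T : L -> Prop) : Prop := forall x, S x <-> T x.
Definition czero : L -> Prop := fun _ => True.
Definition cone : L -> Prop := fun x => x = ftop.

Definition cJoin (I : Type) (S : I -> L -> Prop) : L -> Prop :=
  fun x => forall i, S i x.
Definition cMeet (I : Type) (S : I -> L -> Prop) : L -> Prop :=
  fun x => forall U, is_sublocale U -> (forall i y, S i y -> U y) -> U x.
Definition cmeet2 (S T : L -> Prop) : L -> Prop :=
  cMeet (fun b : bool => if b then S else T).
Definition cpc (S : L -> Prop) : L -> Prop :=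
  fun x => forall T, is_sublocale T -> ceq (cmeet2 S T) czero -> T x.

End FrameOps.

(* Fbar(L): frame homomorphisms L(IRbar) -> coS(L), represented by     *)
(* their values on the generators (r,---) [fup r] and (---,s) [fdn s], *)
(* which must satisfy the defining relations (r1), (r3), (r4) in       *)
(* coS(L) (universal property of the presented frame), together with   *)
(* the pseudocomplement conditions defining Fbar(L).                   *)
Record Fbar (L : frame) := MkFbar {
  fup : rat -> L -> Prop;
  fdn : rat -> L -> Prop;
  fup_sub : forall r, is_sublocale (fup r);
  fdn_sub : forall s, is_sublocale (fdn s);
  fr1 : forall r s : rat, (s <= r)%R -> ceq (cmeet2 (fup r) (fdn s)) (@czero L);
  fr3 : forall r : rat,
      ceq (fup r) (cJoin (fun s : {s : rat | (r < s)%R} => fup (sval s)));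
  fr4 : forall s : rat,
      ceq (fdn s) (cJoin (fun r : {r : rat | (r < s)%R} => fdn (sval r)));
  fpc1 : forall r s : rat, (r < s)%R -> cle (cpc (fup r)) (fdn s);
  fpc2 : forall r s : rat, (r < s)%R -> cle (cpc (fdn s)) (fup r)
}.

Section FbarOps.
Variable L : frame.

Definition Fle (f g : Fbar L) : Prop :=
  (forall r, cle (fup f r) (fup g r)) /\ (forall s, cle (fdn g s) (fdn f s)).

(* equality of frame homomorphisms = agreement on generators *)
Definition Feq (f g : Fbar L) : Prop :=
  (forall r, ceq (fup f r) (fup g r)) /\ (forall s, ceq (fdn f s) (fdn g s)).

Definition Fis_join (f g h : Fbar L) : Prop :=
  Fle f h /\ Fle g h /\ (forall k, Fle f k -> Fle g k -> Fle h k).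

Definition is_pinfty (f : Fbar L) : Prop :=
  (forall r, ceq (fup f r) (@cone L)) /\ (forall s, ceq (fdn f s) (@czero L)).

End FbarOps.

(* Main.v *)
Require Import Defs.
From mathcomp Require Import all_boot all_order all_algebra.
From mathcomp Require Import lra.
Import Order.TTheory GRing.Theory Num.Theory.

Set Implicit Arguments.
Unset Strict Implicit.
Unset Printing Implicit Defensive.

Section Frm.
Variable L : frame.
Local Notation le := (@fle L).
Local Notation meet := (@fmeet L).
Local Notation top := (ftop L).

Lemma eqle (a b : L) : a = b -> le a b.
Proof. by move=> ->; apply: fle_refl. Qed.
Lemma le_top (x : L) : le x top.
Proof. by apply: fsup_ub. Qed.
Lemma finf_lb (A : L -> Prop) a : A a -> le (finf A) a.
Proof. move=> Aa; apply: fsup_least => z Hz; exact: Hz. Qed.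
Lemma finf_glb (A : L -> Prop) z : (forall a, A a -> le z a) -> le z (finf A).
Proof. move=> H; by apply: fsup_ub. Qed.
Lemma meetC (x y : L) : meet x y = meet y x.
Proof.
apply: fle_antisym; apply: fmeet_glb;
  [exact: fmeet_r|exact: fmeet_l|exact: fmeet_r|exact: fmeet_l].
Qed.
Lemma meet_mono (a b c d : L) : le a b -> le c d -> le (meet a c) (meet b d).
Proof.
move=> h1 h2; apply: fmeet_glb.
  exact: fle_trans (fmeet_l _ _) h1.
exact: fle_trans (fmeet_r _ _) h2.
Qed.
Lemma le_meet (y a b : L) : le y (meet a b) <-> le y a /\ le y b.
Proof.
split=> [H|[h1 h2]]; last exact: fmeet_glb.
split; [exact: fle_trans H (fmeet_l _ _)|exact: fle_trans H (fmeet_r _ _)].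
Qed.
Lemma imp_adj (z x y : L) : le z (fimp x y) <-> le (meet z x) y.
Proof.
split=> [H|H]; last by apply: fsup_ub.
apply: fle_trans (meet_mono H (fle_refl x)) _.
rewrite meetC /fimp fmeet_distr. apply: fsup_least => w [a [Ha ->]].
by rewrite meetC.
Qed.
Lemma le_eq (a b : L) : (forall z, le z a <-> le z b) -> a = b.
Proof.
move=> H; apply: fle_antisym; [apply/H|apply/H]; exact: fle_refl.
Qed.
Lemma imp_meet (z a b : L) : fimp z (meet a b) = meet (fimp z a) (fimp z b).
Proof.
apply: le_eq => y; rewrite imp_adj !le_meet !imp_adj; done.
Qed.

Definition nu (S : L -> Prop) (x : L) := finf (fun s => S s /\ le x s).
Definition w (S : L -> Prop) (x : L) := fimp (nu S x) x.
Definition Disj (S T : L -> Prop) :=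
  forall x, exists s t, S s /\ T t /\ x = meet s t.

Lemma finf0 : finf (fun _ : L => False) = top.
Proof. apply: fle_antisym; [exact: le_top|by apply: finf_glb]. Qed.
Lemma sub_top (S : L -> Prop) : is_sublocale S -> S top.
Proof. by move=> hS; rewrite -finf0; apply: hS.1. Qed.
Lemma sub_meet (S : L -> Prop) (s t : L) : is_sublocale S -> S s -> S t -> S (meet s t).
Proof.
move=> hS Ss St.
have ->: meet s t = finf (fun a => a = s \/ a = t).
  apply: fle_antisym.
    by apply: finf_glb => a [->|->]; [exact: fmeet_l|exact: fmeet_r].
  apply: fmeet_glb; apply: finf_lb; by [left|right].
by apply: hS.1 => a [->|->].
Qed.
Lemma nu_in (S : L -> Prop) (x : L) : is_sublocale S -> S (nu S x).
Proof. by move=> hS; apply: hS.1 => a []. Qed.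
Lemma nu_ge (S : L -> Prop) (x : L) : le x (nu S x).
Proof. by apply: finf_glb => a []. Qed.
Lemma nu_le (S : L -> Prop) (x s : L) : S s -> le x s -> le (nu S x) s.
Proof. by move=> Ss xs; apply: finf_lb. Qed.
Lemma meet_w (S : L -> Prop) (x : L) : meet (nu S x) (w S x) = x.
Proof.
apply: fle_antisym.
  by rewrite meetC; apply/imp_adj; apply: fle_refl.
apply: fmeet_glb; first exact: nu_ge.
by apply/imp_adj; apply: fmeet_l.
Qed.

Lemma L3a (S T : L -> Prop) (s t : L) : is_sublocale S -> is_sublocale T -> S s -> T t ->
  T (w S (meet s t)).
Proof.
move=> hS hT Ss Tt.
have ->: w S (meet s t) = fimp (nu S (meet s t)) t.
  apply: le_eq => z; rewrite /w !imp_adj; split=> H.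
    exact: fle_trans H (fmeet_r _ _).
  apply: fmeet_glb => //. apply: fle_trans (fmeet_r _ _) _.
  apply: nu_le => //; exact: fmeet_l.
exact: hT.2.
Qed.
Lemma L3b (S T : L -> Prop) : (forall x, T (w S x)) -> is_sublocale S -> Disj S T.
Proof.
move=> H hS x; exists (nu S x), (w S x); split; first exact: nu_in.
by split; [apply: H|rewrite meet_w].
Qed.
Lemma L3 (S T : L -> Prop) : Disj S T -> is_sublocale S -> is_sublocale T ->
  forall x, T (w S x).
Proof. move=> H hS hT x; case: (H x) => s [t [Ss [Tt ->]]]; exact: L3a. Qed.

Definition Pw (S T : L -> Prop) := fun y => T (w S y).
Lemma Pw_sub S T : is_sublocale S -> is_sublocale T -> is_sublocale (Pw S T).
Proof.
move=> hS hT; split.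
- move=> A HA.
  set s := finf (fun z => exists a, A a /\ z = nu S a).
  set t := finf (fun z => exists a, A a /\ z = w S a).
  have ->: finf A = meet s t.
    apply: fle_antisym.
    + apply: fmeet_glb; apply: finf_glb => z [a [Aa ->]].
      * exact: fle_trans (finf_lb Aa) (nu_ge _ _).
      * apply/imp_adj. exact: fle_trans (fmeet_l _ _) (finf_lb Aa).
    + apply: finf_glb => a Aa. apply: fle_trans _ (eqle (meet_w S a)).
      apply: meet_mono; apply: finf_lb; by exists a.
  apply: L3a => //.
  + apply: hS.1 => z [a [_ ->]]. exact: nu_in.
  + apply: hT.1 => z [a [Aa ->]]. exact: HA.
- move=> z y Hy. rewrite /Pw.
  have ->: fimp z y = meet (fimp z (nu S y)) (fimp z (w S y))
    by rewrite -imp_meet meet_w.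
  apply: L3a => //. by apply: hS.2; exact: nu_in. exact: hT.2.
Qed.

Lemma L4r (S T : L -> Prop) : Disj S T -> ceq (cmeet2 S T) (@czero L).
Proof.
move=> H x; split=> // _ U hU HU. case: (H x) => s [t [Ss [Tt ->]]].
apply: sub_meet hU _ _; [exact: (HU true) | exact: (HU false)].
Qed.
Lemma L4l (S T : L -> Prop) : is_sublocale S -> is_sublocale T ->
  ceq (cmeet2 S T) (@czero L) -> Disj S T.
Proof.
move=> hS hT H; apply: L3b => // x.
have: cmeet2 S T x by apply/H.
move/(_ (Pw S T) (Pw_sub hS hT)). apply. case=> y /=.
- move=> Sy. rewrite /Pw. have ->: w S y = top.
    apply: fle_antisym; first exact: le_top. apply/imp_adj.
    apply: fle_trans (fmeet_r _ _) _. exact: nu_le (fle_refl _).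
  exact: sub_top.
- move=> Ty. exact: hT.2.
Qed.

Lemma Disj_mono (S S' T T' : L -> Prop) : (forall x, S x -> S' x) -> (forall x, T x -> T' x) ->
  Disj S T -> Disj S' T'.
Proof.
move=> h1 h2 H x; case: (H x) => s [t [Ss [Tt ->]]].
by exists s, t; split; [apply: h1|split; [apply: h2|]].
Qed.
Lemma Disj_sym (S T : L -> Prop) : Disj S T -> Disj T S.
Proof.
move=> H x; case: (H x) => s [t [Ss [Tt ->]]].
by exists t, s; split=> //; split=> //; rewrite meetC.
Qed.

Lemma cpc_sub (S : L -> Prop) : is_sublocale (cpc S).
Proof.
split.
- move=> A HA T hT hST. apply: hT.1 => a Aa. exact: HA a Aa T hT hST.
- move=> x s Hs T hT hST. apply: hT.2. exact: Hs T hT hST.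
Qed.
Lemma cJoin_sub I (T : I -> L -> Prop) :
  (forall i, is_sublocale (T i)) -> is_sublocale (cJoin T).
Proof.
move=> hT; split.
- move=> A HA i. apply: (hT i).1 => a Aa. exact: HA a Aa i.
- move=> x s Hs i. apply: (hT i).2. exact: Hs i.
Qed.
Lemma cMeet_sub I (T : I -> L -> Prop) : is_sublocale (cMeet T).
Proof.
split.
- move=> A HA U hU HU. apply: hU.1 => a Aa. exact: HA a Aa U hU HU.
- move=> x s Hs U hU HU. apply: hU.2. exact: Hs U hU HU.
Qed.
Lemma cMeet_ge I (T : I -> L -> Prop) i (x : L) : T i x -> cMeet T x.
Proof. move=> Tx U hU HU; exact: HU i x Tx. Qed.

Lemma Disj_pc (S : L -> Prop) : is_sublocale S -> Disj S (cpc S).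
Proof.
move=> hS; apply: L3b => // x T hT hST.
exact: L3 (L4l hS hT hST) hS hT x.
Qed.
Lemma pc_le (S A : L -> Prop) : is_sublocale S -> is_sublocale A ->
  (Disj S A <-> forall x, cpc S x -> A x).
Proof.
move=> hS hA; split.
- move=> H x Hx; exact: Hx A hA (L4r H).
- move=> H; exact: Disj_mono (fun x h => h) H (Disj_pc hS).
Qed.
Lemma cpc_anti (A B : L -> Prop) : (forall x, A x -> B x) -> forall x, cpc B x -> cpc A x.
Proof.
move=> AB x Hx T hT hAT; apply: (Hx T hT) => y; split=> // _.
have: cmeet2 A T y by apply/hAT.
move=> HA U hU HU; apply: (HA U hU); case=> z /=.
- move=> Az; exact: (HU true) z (AB z Az).
- exact: (HU false).
Qed.
Lemma pc2_le (S : L -> Prop) : is_sublocale S -> forall x, cpc (cpc S) x -> S x.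
Proof. move=> hS; apply/(pc_le (cpc_sub S) hS); apply: Disj_sym; exact: Disj_pc. Qed.
Lemma pc3 (S : L -> Prop) : is_sublocale S -> forall x, cpc S x -> cpc (cpc (cpc S)) x.
Proof. move=> hS; apply: cpc_anti; exact: pc2_le. Qed.
Lemma Disj_inter I (S : L -> Prop) (T : I -> L -> Prop) : is_sublocale S ->
  (forall i, is_sublocale (T i)) -> (forall i, Disj S (T i)) -> Disj S (cJoin T).
Proof. move=> hS hT H; apply: L3b => // x i; exact: L3 (H i) hS (hT i) x. Qed.

Lemma cone_sub : is_sublocale (@cone L).
Proof.
split.
- move=> A HA; apply: fle_antisym; first exact: le_top.
  by apply: finf_glb => a /HA ->; apply: fle_refl.
- move=> x s ->; apply: fle_antisym; first exact: le_top.
  apply/imp_adj; exact: fmeet_l.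
Qed.
Lemma czero_sub : is_sublocale (@czero L).
Proof. by split. Qed.
Lemma pc_full (A : L -> Prop) : (forall x, A x) -> forall x, cpc A x -> @cone L x.
Proof.
move=> HA x Hx; apply: (Hx _ (@cone_sub)); apply: L4r => y.
exists y, top; split=> //; split=> //.
apply: fle_antisym; [apply: fmeet_glb; [exact: fle_refl|exact: le_top]|exact: fmeet_l].
Qed.

End Frm.

Lemma meet_top_l (L : frame) (t : L) : fmeet (ftop L) t = t.
Proof.
apply: fle_antisym; first exact: fmeet_r.
apply: fmeet_glb; [exact: le_top|exact: fle_refl].
Qed.

Lemma ltr1 (r : rat) : (r < r + 1)%R. Proof. lra. Qed.
Lemma ltrm1 (r : rat) : (r - 1 < r)%R. Proof. lra. Qed.

Section Main.
Variable L : frame.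
Variable f : Fbar L.

Definition Dn := cJoin (fun s : rat => fdn f s).
Lemma Dn_sub : is_sublocale Dn. Proof. apply: cJoin_sub => s; exact: fdn_sub. Qed.

Lemma p32 : ceq (cMeet (fun r : rat => fup f r)) (@czero L) -> ceq (cpc Dn) (@czero L).
Proof.
move=> H x; split=> // _.
have: cMeet (fun r : rat => fup f r) x by apply/H.
move/(_ _ (cpc_sub Dn)); apply => r y Hy.
apply: (@cpc_anti _ Dn (fdn f (r+1))) => [z Hz|]; first exact: Hz.
exact: (fpc2 (ltr1 r) Hy).
Qed.

Lemma p23 : ceq (cpc Dn) (@czero L) -> ceq (cMeet (fun r : rat => fup f r)) (@czero L).
Proof.
move=> H x; split=> // _.
have hU := cMeet_sub (fun r : rat => fup f r).
apply: (pc_le Dn_sub hU).1; last by apply/H.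
apply: Disj_sym; apply: Disj_inter => // [s|s]; first exact: fdn_sub.
apply: (Disj_mono _ (fun y h => h) (L4l (fup_sub f s) (fdn_sub f s) (fr1 f (lexx s)))).
move=> y Hy; exact: cMeet_ge Hy.
Qed.

Definition pinf : Fbar L.
refine (@MkFbar L (fun _ => @cone L) (fun _ => @czero L) _ _ _ _ _ _ _).
- move=> r; exact: cone_sub.
- move=> s; exact: czero_sub.
- move=> r s _; apply: L4r => y. exists (ftop L), y; split=> //; split=> //.
  by rewrite meet_top_l.
- move=> r x; split=> [Hx i|Hx] //. exact: (Hx (exist _ (r+1)%R (ltr1 r))).
- move=> s x; split=> [Hx i|Hx] //.
- move=> r s _ x _ T hT hT1.
  case: (L4l (@cone_sub L) hT hT1 x) => a [t [-> [Tt ->]]]. by rewrite meet_top_l.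
- move=> r s _ x -> T hT _; exact: sub_top hT.
Defined.

Lemma pinf_inf : is_pinfty pinf.
Proof. by split=> r x. Qed.

Definition gg : Fbar L.
refine (@MkFbar L (fun _ => cpc (cpc Dn)) (fun _ => cpc Dn) _ _ _ _ _ _ _).
- move=> r; exact: cpc_sub.
- move=> s; exact: cpc_sub.
- move=> r s _; apply: L4r; apply: Disj_sym; apply: Disj_pc; exact: cpc_sub.
- move=> r x; split=> [Hx i|Hx] //. exact: (Hx (exist _ (r+1)%R (ltr1 r))).
- move=> s x; split=> [Hx i|Hx] //. exact: (Hx (exist (fun r => (r < s)%R) (s-1)%R (ltrm1 s))).
- move=> r s _ x Hx. exact: pc3 Dn_sub x Hx.
- by move=> r s _ x Hx.
Defined.

Lemma join_pinf : Fis_join f gg pinf.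
Proof.
have Fle_pinf : forall k : Fbar L, Fle k pinf.
  move=> k; split=> [r x /= ->|s x _ //]; exact: sub_top (fup_sub k r).
split; first exact: Fle_pinf. split; first exact: Fle_pinf.
move=> k [_ hf] [_ hg].
have full : forall s x, fdn k s x.
  move=> s x.
  have D1 : Disj (fdn f s) (cpc Dn).
    exact: (Disj_mono (fun y (h : Dn y) => h s) (fun y h => h) (Disj_pc Dn_sub)).
  have := (L4r D1 x).2 I.
  move/(_ (fdn k s) (fdn_sub k s)); apply; case=> y /=; [exact: hf s y | exact: hg s y].
split=> [r x Hx|s x _]; last exact: full.
exact: (pc_full (full (r+1)%R) (fpc2 (ltr1 r) Hx)).
Qed.

Lemma p12 : (forall g h : Fbar L, Fis_join f g h -> is_pinfty h -> is_pinfty g) ->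
  ceq (cpc Dn) (@czero L).
Proof.
move=> H1. case: (H1 gg pinf join_pinf pinf_inf) => _ H. exact: (H 0%R).
Qed.

End Main.

Section KK.
Variable L : frame.
Variables f g : Fbar L.

Definition k0 (u : rat) := cJoin (fun b : bool => if b then fup f u else fup g u).
Lemma k0_sub u : is_sublocale (k0 u).
Proof. apply: cJoin_sub; case; [exact: fup_sub|exact: fup_sub]. Qed.
Definition kup (r : rat) :=
  cJoin (fun u : {u : rat | (r < u)%R} => cpc (cpc (k0 (sval u)))).
Definition kdn (s : rat) :=
  cJoin (fun t : {t : rat | (t < s)%R} => cpc (kup (sval t))).
Lemma kup_sub r : is_sublocale (kup r).
Proof. apply: cJoin_sub => i; exact: cpc_sub. Qed.
Lemma kdn_sub s : is_sublocale (kdn s).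
Proof. apply: cJoin_sub => i; exact: cpc_sub. Qed.

Lemma fup_mono (h : Fbar L) (t u : rat) : (t < u)%R -> forall x, fup h t x -> fup h u x.
Proof. move=> tu x Hx. exact: ((fr3 h t x).1 Hx (exist _ u tu)). Qed.

Lemma kup_mono t r : (t <= r)%R -> forall x, kup t x -> kup r x.
Proof.
move=> tr x Hx [u ru]. apply: (Hx (exist _ u _)) => /=. exact: le_lt_trans tr ru.
Qed.

Lemma mid1 (r s : rat) : (r < s)%R -> (r < (r + s) / 2)%R. Proof. move=> h; lra. Qed.
Lemma mid2 (r s : rat) : (r < s)%R -> ((r + s) / 2 < s)%R. Proof. move=> h; lra. Qed.

Lemma k0_mono t u : (t < u)%R -> forall x, k0 t x -> k0 u x.
Proof. move=> tu x Hx b; case: b (Hx b) => /= hb; exact: (fup_mono tu hb). Qed.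

Lemma cpc2_mono (A B : L -> Prop) : (forall x, A x -> B x) ->
  forall x, cpc (cpc A) x -> cpc (cpc B) x.
Proof. move=> AB; apply: cpc_anti; apply: cpc_anti; exact: AB. Qed.

Lemma kup_le_f r x : kup r x -> fup f r x.
Proof.
move=> Hx; apply/(fr3 f r x) => [[u ru]] /=.
exact: (pc2_le (k0_sub u) (Hx (exist _ u ru)) true).
Qed.
Lemma kup_le_g r x : kup r x -> fup g r x.
Proof.
move=> Hx; apply/(fr3 g r x) => [[u ru]] /=.
exact: (pc2_le (k0_sub u) (Hx (exist _ u ru)) false).
Qed.

Definition kk : Fbar L.
refine (@MkFbar L kup kdn kup_sub kdn_sub _ _ _ _ _).
- move=> r s sr; apply: L4r; apply: Disj_inter; first exact: kup_sub.
    move=> i; exact: cpc_sub.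
  move=> [t ts] /=.
  apply: (Disj_mono (kup_mono _) (fun y h => h) (Disj_pc (kup_sub t))).
  exact: ltW (lt_le_trans ts sr).
- move=> r x; split=> Hx.
    move=> [s rs] [u su] /=. exact: (Hx (exist _ u (lt_trans rs su))).
  move=> [u ru] /=.
  exact: (Hx (exist _ ((r + u) / 2)%R (mid1 ru)) (exist _ u (mid2 ru))).
- move=> s x; split=> Hx.
    move=> [r rs] [t tr] /=. exact: (Hx (exist _ t (lt_trans tr rs))).
  move=> [t ts] /=.
  exact: (Hx (exist _ ((t + s) / 2)%R (mid2 ts)) (exist _ t (mid1 ts))).
- move=> r s rs x Hx. exact: (Hx (exist _ r rs)).
- move=> r s rs x Hx.
  pose t0 := ((r + s) / 2)%R.
  have h1 : cpc (cpc (k0 t0)) x := Hx (exist _ t0 (mid1 rs)).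
  have h2 := pc3 (cpc_sub (k0 t0)) h1.
  have h3 : forall y, cpc (cpc (k0 t0)) y -> kup t0 y.
    move=> y Hy [u tu] /=. exact: (cpc2_mono (k0_mono tu) Hy).
  have h4 := cpc2_mono h3 h2.
  apply: (cpc_anti _ h4) => y Hy. exact: (Hy (exist _ t0 (mid2 rs))).
Defined.

Lemma Fle_fk : Fle f kk.
Proof.
split=> [r x /= Hx|s x Hx [t ts] /=]; first exact: kup_le_f.
apply: (cpc_anti (@kup_le_f t)). exact: (fpc1 ts Hx).
Qed.
Lemma Fle_gk : Fle g kk.
Proof.
split=> [r x /= Hx|s x Hx [t ts] /=]; first exact: kup_le_g.
apply: (cpc_anti (@kup_le_g t)). exact: (fpc1 ts Hx).
Qed.

End KK.

Lemma p21 (L : frame) (f : Fbar L) : ceq (cpc (Dn f)) (@czero L) ->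
  forall g h : Fbar L, Fis_join f g h -> is_pinfty h -> is_pinfty g.
Proof.
move=> H2 g h [_ [_ Hj]] [_ Hh].
have [_ Hhk] := Hj (kk f g) (Fle_fk f g) (Fle_gk f g).
have kfull : forall s x, kdn f g s x.
  move=> s x; apply: (Hhk s x); exact: (Hh s x).2 I.
have gfull : forall s0 x, fdn g s0 x.
  move=> s0 x.
  have ha := fdn_sub g s0.
  apply: (pc_le (Dn_sub f) ha).1; last by apply/H2.
  apply: Disj_sym; apply: Disj_inter => // [v|v]; first exact: fdn_sub.
  pose C := cmeet2 (fdn g s0) (fdn f v).
  have hC : is_sublocale C by exact: cMeet_sub.
  apply: (L4l ha (fdn_sub f v)) => y; split=> // _.
  have [t [h1 h2]] : exists t : rat, (s0 <= t)%R /\ (v <= t)%R.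
    case: (leP s0 v) => hsv; [exists v | exists s0]; split=> //; exact: ltW.
  have := kfull (t + 1)%R y (exist _ t (ltr1 t)).
  move/(_ C hC); apply; apply: L4r; apply: Disj_sym.
  rewrite /kup; apply: Disj_inter => //; first by move=> i; exact: cpc_sub.
  move=> [u tu] /=. apply: Disj_sym.
  apply/(pc_le (cpc_sub _) hC) => z Hz.
  have Hz' := pc2_le (cpc_sub (k0 f g u)) Hz.
  apply: ((pc_le (k0_sub f g u) hC).1 _ z Hz').
  apply: Disj_sym; rewrite /k0; apply: Disj_inter => //; first by case; exact: fup_sub.
  have su : (s0 <= u)%R by apply: le_trans h1 (ltW tu).
  have vu : (v <= u)%R by apply: le_trans h2 (ltW tu).
  case; apply: Disj_sym.
  - apply: (Disj_mono (fun y h => h) _ (L4l (fup_sub f u) (fdn_sub f v) (fr1 f vu))).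
    move=> z0 Hz0; exact: (@cMeet_ge _ _ _ false).
  - apply: (Disj_mono (fun y h => h) _ (L4l (fup_sub g u) (fdn_sub g s0) (fr1 g su))).
    move=> z0 Hz0; exact: (@cMeet_ge _ _ _ true).
split=> r x; split=> // Hx.
- exact: (pc_full (gfull (r+1)%R) (fpc2 (ltr1 r) Hx)).
- rewrite /cone in Hx; rewrite Hx; exact: sub_top (fup_sub g r).
Qed.

Theorem proposition5p3 (L : frame) (f : Fbar L) :
  ((forall g h : Fbar L, Fis_join f g h -> is_pinfty h -> is_pinfty g) <->
   ceq (cpc (cJoin (fun s : rat => fdn f s))) (@czero L)) /\
  (ceq (cpc (cJoin (fun s : rat => fdn f s))) (@czero L) <->
   ceq (cMeet (fun r : rat => fup f r)) (@czero L)).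
Proof.
split; split.
- exact: p12.
- exact: p21.
- exact: p23.
- exact: p32.
Qed.
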